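(* Let $(X,b,m)$ be a connected weighted graph satisfying conditions (B) and (M), and put $b_{max}:=\sup_{x,y\in X} b(x,y)$ (which satisfies $b_{max}\le \delta\, m_{max}<\infty$). Then: (a) For any path $\gamma=(x_0,\dots,x_k)$ we have $L(\gamma)\ge b_{max}^{-1}\, k$, where $k$ is the number of edges of $\gamma$. In particular, any two different points $x,y\in X$ satisfy $d(x,y)\ge \frac{1}{b_{max}}$. (b) The metric space $(X,d)$ is locally compact and complete. (c) For any $r\ge 0$ and $x\in X$, $$\#B_r(x)\le \left(r\cdot\delta\cdot m_{max}\right)^{r\cdot b_{max}}+1 .$$ In particular every closed ball is finite, and for any $r\ge 0$ one has $\sup_{x\in X} m(B_r(x))<\infty$. (d) $(X,d)$ is geodesic: for any $x,y\in X$ there exists a path $\gamma$ from $x$ to $y$ with $L(\gamma)=d(x,y)$.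
   Context: A weighted graph $(X,b,m)$ consists of a countable set $X$, a symmetric function $b:X\times X\to[0,\infty)$ with $b(x,x)=0$ and $\sum_{y\in X}b(x,y)<\infty$ for all $x\in X$, and a function $m:X\to(0,\infty)$; for $A\subset X$ put $m(A):=\sum_{x\in A}m(x)$. Condition (B): $\delta:=\sup_{x\in X}\frac{1}{m(x)}\sum_{y\in X}b(x,y)<\infty$. Condition (M): $m_{max}:=\sup_{x\in X}m(x)<\infty$. A path from $x_0$ to $x_k$ is a finite sequence $\gamma=(x_0,x_1,\dots,x_k)$ with $b(x_j,x_{j+1})>0$ for $j=0,\dots,k-1$ (its $k$ edges are the pairs $\{x_j,x_{j+1}\}$); trivial paths $(x)$ from $x$ to $x$ are allowed and have length $0$. The length of $\gamma$ is $L(\gamma):=\sum_{j=0}^{k-1}\frac{1}{b(x_j,x_{j+1})}$. The graph is connected if any two points are joined by a path. The distance is $d(x,y):=\inf\{L(\gamma):\gamma \text{ a path from } x \text{ to } y\}$, which is a metric on $X$. $B_r(x):=\{y\in X: d(x,y)\le r\}$ denotes the closed ball. *)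

(* Defs.v *)
From Stdlib Require Import List.
From HB Require Import structures.
From mathcomp Require Import all_boot all_order all_algebra.
From mathcomp Require Import all_classical all_reals all_analysis.
Set Implicit Arguments. Unset Strict Implicit. Unset Printing Implicit Defensive.
Import Order.TTheory GRing.Theory Num.Theory.
Local Open Scope classical_set_scope.
Local Open Scope ring_scope.

Section WeightedGraph.
Variables (R : realType) (X : countType) (b : X -> X -> R) (m : X -> R).

Definition weighted_graph : Prop :=
  [/\ (forall x y, b x y = b y x),
      (forall x y, 0 <= b x y),
      (forall x, b x x = 0),
      (forall x, (\esum_(y in [set: X]) (b x y)%:E < +oo)%E)
    & (forall x, 0 < m x)].

Definition delta_e : \bar R :=
  ereal_sup [set ((m x)^-1)%:E * \esum_(y in [set: X]) (b x y)%:E | x in [set: X]]%E.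

Definition mmax_e : \bar R := ereal_sup [set (m x)%:E | x in [set: X]].

Definition bmax_e : \bar R := ereal_sup [set (b p.1 p.2)%:E | p in [set: X * X]].

Definition cond_B : Prop := (delta_e < +oo)%E.
Definition cond_M : Prop := (mmax_e < +oo)%E.

Definition delta : R := fine delta_e.
Definition mmax : R := fine mmax_e.
Definition bmax : R := fine bmax_e.

(* A path from x0 is x0 :: s, consecutive vertices joined by an edge (b > 0);
   it ends at [last x0 s] and has [size s] edges. *)
Definition is_path (x0 : X) (s : seq X) : bool := path (fun u v => 0 < b u v) x0 s.

Fixpoint plength (x0 : X) (s : seq X) : R :=
  match s with
  | [::] => 0
  | y :: s' => (b x0 y)^-1 + plength y s'
  end.

Definition connected_graph : Prop :=
  forall x y, exists s, is_path x s /\ last x s = y.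

Definition dist (x y : X) : R :=
  inf [set plength x s | s in [set s | is_path x s /\ last x s = y]].

Definition cball (x : X) (r : R) : set X := [set y | dist x y <= r].
Definition oball (x : X) (r : R) : set X := [set y | dist x y < r].

Definition d_open (U : set X) : Prop :=
  forall y, U y -> exists2 e : R, 0 < e & oball y e `<=` U.

Definition d_compact (K : set X) : Prop :=
  forall (I : Type) (U : I -> set X),
    (forall i, d_open (U i)) -> K `<=` \bigcup_i U i ->
    exists s : seq I, K `<=` [set z | exists2 i, In i s & U i z].

Definition d_locally_compact : Prop :=
  forall x, exists K : set X, (exists2 e : R, 0 < e & oball x e `<=` K) /\ d_compact K.

Definition d_cauchy (u : nat -> X) : Prop :=
  forall e : R, 0 < e -> exists N, forall n k, (N <= n)%N -> (N <= k)%N -> dist (u n) (u k) < e.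

Definition d_converges (u : nat -> X) (l : X) : Prop :=
  forall e : R, 0 < e -> exists N, forall n, (N <= n)%N -> dist (u n) l < e.

Definition d_complete : Prop :=
  forall u : nat -> X, d_cauchy u -> exists l, d_converges u l.

End WeightedGraph.

(* Main.v *)
Require Import Defs.
From HB Require Import structures.
From mathcomp Require Import all_boot all_order all_algebra.
From mathcomp Require Import all_classical all_reals all_analysis.
From mathcomp Require Import lra zify.
Import Order.TTheory GRing.Theory Num.Theory.
Local Open Scope classical_set_scope.
Local Open Scope ring_scope.

Lemma amgm_list (R : realType) (l : seq R) r : all (fun v => 0 < v) l ->
  \sum_(v <- l) v^-1 <= r -> (size l)%:R ^+ size l <= r ^+ size l * \prod_(v <- l) v.
Proof.
move=> lpos hr.
set n := size l.
have h := leif_AGM_scaled (A := predT) (E := fun i : 'I_n => (nth 1 l i)^-1).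
have cA : #|(predT : {pred 'I_n})| = n by rewrite cardT size_enum_ord.
rewrite cA in h.
have Epos : forall i : 'I_n, 0 < (nth 1 l i)^-1.
  move=> i; rewrite invr_gt0; exact: (allP lpos) _ (mem_nth _ (ltn_ord i)).
have {}h := (h (fun i _ => mulrn_wge0 _ (ltW (Epos i)))).1.
rewrite /= in h.
have hs : \sum_(i in (predT : {pred 'I_n})) (nth 1 l i)^-1 = \sum_(v <- l) v^-1.
  by rewrite (big_nth 1) big_mkord; apply: eq_bigl.
have hp : \prod_(i in (predT : {pred 'I_n})) ((nth 1 l i)^-1 *+ n) = n%:R ^+ n * (\prod_(v <- l) v)^-1.
  rewrite (big_nth 1) big_mkord -prodfV.
  under eq_bigr do rewrite -mulr_natl.
  rewrite big_split /= prodr_const cA; congr (_ * _); apply: eq_bigl => i //.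
rewrite hs hp in h.
have s0 : 0 <= \sum_(v <- l) v^-1.
  by rewrite big_seq; apply: sumr_ge0 => v /(allP lpos) /= v0; rewrite invr_ge0 ltW.
have pp : 0 < \prod_(v <- l) v.
  by rewrite big_seq; apply: prodr_gt0 => v /(allP lpos).
rewrite -ler_pdivrMr //; apply: (le_trans h).
apply: lerXn2r => //; rewrite nnegrE //; exact: le_trans hr.
Qed.

Lemma regroup (R : realType) (T U : eqType) (P : seq T) (h : T -> U) (F : T -> R) :
  \sum_(p <- P) F p = \sum_(w <- undup (map h P)) \sum_(p <- P | h p == w) F p.
Proof.
under [RHS]eq_bigr do rewrite big_mkcond.
rewrite exchange_big /=; apply: eq_big_seq => p pP.
rewrite -big_mkcond /= (big_rem (h p)); last by rewrite mem_undup map_f.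
rewrite eqxx big1_seq; first by rewrite /= addr0.
move=> w /andP[/eqP <-].
by rewrite mem_rem_uniqF // undup_uniq.
Qed.


Lemma arith (R : realType) (D : R) (c : nat -> nat) K : 0 <= D ->
  (forall k, (0 < k)%N -> (c k)%:R * k%:R ^+ k <= D ^+ k) ->
  (1 <= D -> (\sum_(k < K) c k.+1)%:R <= D ^+ K) /\
  (D < 1 -> (\sum_(k < K) c k.+1 = 0)%N).
Proof.
move=> D0 hc; split; last first.
  move=> D1; apply: big1 => k _.
  have := hc k.+1 isT; case: (c k.+1) => // n h.
  have h1 : 1 <= (n.+1)%:R * (k.+1)%:R ^+ k.+1 :> R.
    by rewrite -natrX -natrM ler1n muln_gt0 expn_gt0.
  have h2 : D ^+ k.+1 < 1 by rewrite exprn_ilt1.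
  by have := le_lt_trans h1 (le_lt_trans h h2); rewrite ltxx.
move=> D1; elim: K => [|K IH]; first by rewrite big_ord0 expr0.
rewrite big_ord_recr /= natrD.
case: K IH => [|K] IH.
  by rewrite big_ord0 add0r; have := hc 1%N isT; rewrite expr1 mulr1.
have hA := exprn_ge0 K.+1 D0.
have step : D ^+ K.+1 <= D ^+ K.+2 by rewrite [X in _ <= X]exprS ler_peMl.
case E: (c K.+2) => [|n].
  by rewrite addr0; exact: le_trans IH step.
have h := hc K.+2 isT; rewrite E in h.
have hK : (K.+2)%:R ^+ K.+2 <= D ^+ K.+2.
  apply: le_trans h; rewrite ler_peMl ?exprn_ge0 // ler1n //.
have hKD : (K.+2)%:R <= D.
  by move: hK; rewrite ler_pXn2r // nnegrE.
have h2 : 2 <= (K.+2)%:R ^+ K.+2 :> R.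
  apply: le_trans (ler_eXnr _ _) => //; first by rewrite ler_nat.
  by rewrite ler1n.
have hc2 : (n.+1)%:R * 2 <= D ^+ K.+2 :> R.
  by apply: le_trans h; rewrite ler_wpM2l.
have hD2 : 2 * D ^+ K.+1 <= D ^+ K.+2.
  rewrite [X in _ <= X]exprS ler_wpM2r //; apply: le_trans hKD; by rewrite ler_nat.
lra.
Qed.


Lemma bounded_finite (T : eqType) (A : set T) (n : nat) :
  (forall s, uniq s -> (forall z, z \in s -> A z) -> (size s <= n)%N) ->
  exists s, uniq s /\ forall z, z \in s <-> A z.
Proof.
move=> hb.
suff H : forall j s, uniq s -> (forall z, z \in s -> A z) -> (n - size s <= j)%N ->
    exists s, uniq s /\ forall z, z \in s <-> A z.
  by apply: (H n [::]) => //; rewrite subn0.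
elim=> [|j IH] s us hs hj.
  case: (pselect (exists z, A z /\ z \notin s)) => [[z [Az zs]]|nz].
    have := hb (z :: s); rewrite /= zs us => /(_ isT).
    have : forall y, y \in z :: s -> A y by move=> y; rewrite inE => /orP [/eqP ->|/hs].
    move=> h /(_ h) h2; exfalso; move: hj h2 => /=; lia.
  exists s; split => // z; split; first exact: hs.
  by move=> Az; case: (boolP (z \in s)) => // zs; exfalso; apply: nz; exists z.
case: (pselect (exists z, A z /\ z \notin s)) => [[z [Az zs]]|nz].
  have hs' : forall y, y \in z :: s -> A y by move=> y; rewrite inE => /orP [/eqP ->|/hs].
  have us' : uniq (z :: s) by rewrite /= zs us.
  have := hb _ us' hs' => hsz.
  apply: (IH (z :: s)) => //; move: hj hsz => /=; lia.
exists s; split => // z; split; first exact: hs.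
by move=> Az; case: (boolP (z \in s)) => // zs; exfalso; apply: nz; exists z.
Qed.

Lemma seq_argmin (R : realType) (T : eqType) (f : T -> R) (Q : seq T) q0 :
  q0 \in Q -> exists2 q, q \in Q & forall q', q' \in Q -> f q <= f q'.
Proof.
move=> hq0; have : Q != [::] by case: Q hq0.
elim: Q {hq0} => [|a Q IH] // _.
case: Q IH => [|c Q] IH.
  by exists a; rewrite ?mem_head // => q'; rewrite inE => /eqP ->.
have [q qQ hq] := IH isT.
case: (leP (f a) (f q)) => h.
  exists a; first exact: mem_head.
  move=> q'; rewrite inE => /orP [/eqP -> //|/hq]; exact: le_trans.
exists q; first by rewrite inE qQ orbT.
move=> q'; rewrite inE => /orP [/eqP -> |/hq //]; exact: ltW.
Qed.

Section Main.
Variables (R : realType) (X : countType) (b : X -> X -> R) (m : X -> R).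
Hypothesis wg : weighted_graph b m.
Hypothesis cB : cond_B b m.
Hypothesis cM : cond_M m.

Lemma b_ge0 x y : 0 <= b x y. Proof. by case: wg. Qed.
Lemma m_gt0 x : 0 < m x. Proof. by case: wg. Qed.

Lemma mmax_fin x : mmax_e m = (mmax m)%:E /\ m x <= mmax m.
Proof.
have h : ((m x)%:E <= mmax_e m)%E by apply: ereal_sup_ubound; exists x.
rewrite /mmax; move: cM h; rewrite /cond_M.
by case: (mmax_e m) => [r| |] //= _; rewrite lee_fin.
Qed.

Lemma m_le_mmax x : m x <= mmax m. Proof. by case: (mmax_fin x). Qed.

Lemma esum_b_fin x : exists e : R,
  (\esum_(y in [set: X]) (b x y)%:E = e%:E)%E /\ 0 <= e.
Proof.
case: wg => _ _ _ hs _.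
have h0 : (0 <= \esum_(y in [set: X]) (b x y)%:E)%E.
  by apply: esum_ge0 => y _; rewrite lee_fin b_ge0.
move: (hs x) h0; case: (\esum_(y in [set: X]) (b x y)%:E) => [r| |] //= _.
by rewrite lee_fin => r0; exists r.
Qed.

Lemma delta_fin x : delta_e b m = (delta b m)%:E /\ 0 <= delta b m /\
  forall e : R, (\esum_(y in [set: X]) (b x y)%:E = e%:E)%E ->
     (m x)^-1 * e <= delta b m.
Proof.
have [e [he e0]] := esum_b_fin x.
have h : (((m x)^-1)%:E * (\esum_(y in [set: X]) (b x y)%:E) <= delta_e b m)%E.
  by apply: ereal_sup_ubound; exists x.
have ge0 : 0 <= (m x)^-1 * e by rewrite mulr_ge0 // invr_ge0 ltW // m_gt0.
rewrite he -EFinM in h.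
rewrite /delta; move: cB h; rewrite /cond_B.
case: (delta_e b m) => [r| |] //= _; rewrite lee_fin => hr.
split => //; split; first exact: le_trans hr.
by move=> e'; rewrite he => -[<-].
Qed.

Lemma sum_b_le x (W : seq X) : uniq W ->
  \sum_(w <- W) b x w <= delta b m * mmax m.
Proof.
move=> uW.
have [e [he e0]] := esum_b_fin x.
have [_ [d0 hd]] := delta_fin x.
have := hd e he.
have mx := m_gt0 x.
have h1 : \sum_(w <- W) b x w <= e.
  rewrite -lee_fin -he -sumEFin fsbig_seq //.
  apply: esum_ge; exists [set` W] => //.
  by split => //; exact: finite_seq.
move=> h2.
have h3 : e <= delta b m * m x.
  have mi : 0 < (m x)^-1 by rewrite invr_gt0.
  rewrite -(ler_pM2l mi) [delta b m * m x]mulrC mulrA mulVf ?mul1r //.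
  by rewrite gt_eqF.
apply: (le_trans h1); apply: (le_trans h3).
by rewrite ler_wpM2l // m_le_mmax.
Qed.
Let S := delta b m * mmax m.

Fixpoint pprod (x0 : X) (s : seq X) : R :=
  match s with
  | [::] => 1
  | y :: s' => b x0 y * pprod y s'
  end.

Lemma S_ge0 (x : X) : 0 <= S.
Proof.
have [_ [d0 _]] := delta_fin x.
by rewrite /S mulr_ge0 // (le_trans (ltW (m_gt0 x))) // m_le_mmax.
Qed.

Lemma pprod_ge0 x0 s : 0 <= pprod x0 s.
Proof.
by elim: s x0 => [|y s IH] x0 //=; rewrite mulr_ge0 // b_ge0.
Qed.

Lemma sum_pprod k : forall z (P : seq (seq X)), uniq P ->
  (forall p, p \in P -> is_path b z p /\ size p = k) ->
  \sum_(p <- P) pprod z p <= S ^+ k.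
Proof.
elim: k => [|k IH] z P uP hP.
  have h0 : forall p, p \in P -> p = [::].
    by move=> p /hP [_ /size0nil].
  case: P uP hP h0 => [|p [|q P']] uP hP h0; first by rewrite big_nil.
    by rewrite big_seq1 (h0 p) ?mem_head.
  move: uP; rewrite /= (h0 p) ?mem_head // (h0 q) ?inE ?eqxx ?orbT //.
have S0 := S_ge0 z.
rewrite (@regroup _ _ _ P (head z)).
apply: (@le_trans _ _ (\sum_(w <- undup (map (head z) P)) b z w * S ^+ k)).
  rewrite big_seq [X in _ <= X]big_seq; apply: ler_sum => w wW.
  rewrite -big_filter.
  set Q := [seq p <- P | head z p == w].
  have hQ : forall p, p \in Q -> p = w :: behead p /\ is_path b w (behead p)
      /\ size (behead p) = k /\ 0 < b z w.
    move=> p; rewrite mem_filter => /andP[/eqP hw /hP [pp sp]].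
    case: p hw pp sp => [|y p] //= -> /andP[bzw pth] [sp].
    by [].
  rewrite (eq_big_seq (fun p => b z w * pprod w (behead p))); last first.
    by move=> p /hQ [-> _] /=.
  rewrite -mulr_sumr ler_wpM2l ?b_ge0 // -(big_map behead predT).
  apply: IH.
    rewrite map_inj_in_uniq ?filter_uniq // => p q /hQ [-> _] /hQ [-> _] /= ->.
    by [].
  by move=> q /mapP [p /hQ [_ [pp [sp _]]] ->].
rewrite -mulr_suml exprS ler_wpM2r ?exprn_ge0 //.
apply: sum_b_le; exact: undup_uniq.
Qed.


Fixpoint bl (x0 : X) (s : seq X) : seq R :=
  match s with
  | [::] => [::]
  | y :: s' => b x0 y :: bl y s'
  end.

Lemma bl_facts x0 s : [/\ pprod x0 s = \prod_(v <- bl x0 s) v,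
  plength b x0 s = \sum_(v <- bl x0 s) v^-1, size (bl x0 s) = size s &
  (is_path b x0 s -> all (fun v => 0 < v) (bl x0 s))].
Proof.
elim: s x0 => [|y s IH] x0; first by rewrite /= big_nil big_nil.
have [h1 h2 h3 h4] := IH y.
split; rewrite /= ?big_cons ?h1 ?h2 ?h3 //.
by move=> /andP [-> /h4].
Qed.

Lemma amgm_path z p r : is_path b z p -> plength b z p <= r ->
  (size p)%:R ^+ size p <= r ^+ size p * pprod z p.
Proof.
have [h1 h2 h3 h4] := bl_facts z p.
move=> /h4 hp; rewrite h2 h1 -h3 => hr.
exact: amgm_list.
Qed.

Lemma plength_ge0 x0 s : 0 <= plength b x0 s.
Proof.
by elim: s x0 => [|y s IH] x0 //=; rewrite addr_ge0 // invr_ge0 b_ge0.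
Qed.

Lemma size_bound B x0 s : 0 < B -> (forall u v, b u v <= B) -> is_path b x0 s ->
  B^-1 * (size s)%:R <= plength b x0 s.
Proof.
move=> B0 hB; elim: s x0 => [|y s IH] x0; first by rewrite /= mulr0.
rewrite /= => /andP [by0 hp].
rewrite -addn1 natrD mulrDr mulr1 addrC lerD ?IH //.
by rewrite lef_pV2 ?posrE.
Qed.

Lemma sum_const_seq (T : Type) (s : seq T) (c : R) :
  \sum_(p <- s) c = (size s)%:R * c.
Proof.
elim: s => [|x s IH]; first by rewrite big_nil mul0r.
by rewrite big_cons IH /= -addn1 natrD mulrDl mul1r addrC.
Qed.

Lemma count_k z r k (P : seq (seq X)) : 0 <= r -> uniq P ->
  (forall p, p \in P -> is_path b z p /\ plength b z p <= r) ->
  (count (fun p => size p == k) P)%:R * k%:R ^+ k <= (r * S) ^+ k.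
Proof.
move=> r0 uP hP.
rewrite -size_filter.
set Q := [seq p <- P | size p == k].
have hQ : forall p, p \in Q -> (is_path b z p /\ size p = k) /\ plength b z p <= r.
  by move=> p; rewrite mem_filter => /andP [/eqP sp /hP [pp lp]].
rewrite -sum_const_seq exprMn.
apply: (@le_trans _ _ (\sum_(p <- Q) r ^+ k * pprod z p)).
  rewrite big_seq [X in _ <= X]big_seq; apply: ler_sum => p /hQ [[pp sp] lp].
  by rewrite -sp; apply: amgm_path.
rewrite -mulr_sumr ler_wpM2l ?exprn_ge0 //.
apply: sum_pprod; first exact: filter_uniq.
by move=> p /hQ [].
Qed.


Lemma bmax_fin (x0 : X) : bmax_e b = (bmax b)%:E /\ (forall u v, b u v <= bmax b)
  /\ 0 <= bmax b /\ bmax b <= S.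
Proof.
have bS : forall u v, b u v <= S.
  by move=> u v; have := @sum_b_le u [:: v] isT; rewrite big_seq1.
have ub : (bmax_e b <= S%:E)%E.
  by apply: ge_ereal_sup => _ [[u v] _ <-] /=; rewrite lee_fin.
have lb : ((b x0 x0)%:E <= bmax_e b)%E by apply: ereal_sup_ubound; exists (x0, x0).
have hxx : b x0 x0 = 0 by case: wg.
rewrite hxx in lb.
have hub : forall u v, ((b u v)%:E <= bmax_e b)%E.
  by move=> u v; apply: ereal_sup_ubound; exists (u, v).
rewrite /bmax; move: ub lb hub.
by case: (bmax_e b) => [r| |] //= ub lb hub.
Qed.

Lemma size_le x p r : is_path b x p -> plength b x p <= r ->
  (size p)%:R <= r * bmax b.
Proof.
have [_ [hb [b0 _]]] := bmax_fin x.
case: p => [|y p] hp hl.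
  by rewrite mulr_ge0 // (le_trans (plength_ge0 x [::])).
have by0 : 0 < b x y by move: hp => /= /andP [].
have bp : 0 < bmax b by apply: lt_le_trans (hb x y).
have := @size_bound (bmax b) x _ bp hb hp; rewrite mulrC -ler_pdivrMr // => h.
by apply: le_trans h _.
Qed.

Lemma count_split (P : seq (seq X)) K :
  count (fun p => (size p <= K)%N) P = (\sum_(k < K.+1) count (fun p => size p == k) P)%N.
Proof.
elim: K => [|K IH].
  by rewrite big_ord1; apply: eq_count => p /=; rewrite leqn0.
rewrite big_ord_recr /= -IH.
rewrite -[RHS]addn0 -(count_pred0 P) -count_predUI.
have -> : count (predI (fun p : seq X => (size p <= K)%N) (fun p => size p == K.+1)) P
    = count pred0 P.
  by apply: eq_count => p /=; case: eqP => [->|_]; rewrite ?ltnn ?andbF.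
rewrite count_pred0 addn0 addn0; apply: eq_count => p /=; by rewrite [in LHS]leq_eqVlt ltnS orbC.
Qed.

Lemma exK x r (P : seq (seq X)) : 0 <= r ->
  (forall p, p \in P -> is_path b x p /\ plength b x p <= r) ->
  exists K : nat, K%:R <= r * bmax b /\ forall p, p \in P -> (size p <= K)%N.
Proof.
have [_ [hb [b0 _]]] := bmax_fin x.
move=> r0; elim: P => [|p P IH] hP.
  by exists 0%N; split => //; rewrite mulr_ge0.
have [K [hK hs]] : exists K : nat, K%:R <= r * bmax b /\ forall p, p \in P -> (size p <= K)%N.
  by apply: IH => q qP; apply: hP; rewrite inE qP orbT.
have [pp pl] := hP p (mem_head _ _).
have sp := @size_le x p r pp pl.
exists (maxn (size p) K); split.
  by rewrite /maxn; case: ltnP.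
move=> q; rewrite inE => /orP [/eqP ->|/hs h]; first exact: leq_maxl.
exact: leq_trans h (leq_maxr _ _).
Qed.

Lemma path_count x r (P : seq (seq X)) : 0 <= r -> uniq P ->
  (forall p, p \in P -> is_path b x p /\ plength b x p <= r) ->
  (size P)%:R <= powR (r * delta b m * mmax m) (r * bmax b) + 1.
Proof.
move=> r0 uP hP.
have [K [hK hs]] := @exK x r P r0 hP.
have -> : size P = count (fun p => (size p <= K)%N) P.
  by rewrite -count_predT; apply: eq_in_count => p /hs ->.
rewrite count_split big_ord_recl natrD addrC.
have S0 := S_ge0 x.
set c := fun k => count (fun p : seq X => size p == k) P.
have c0 : (c 0%N)%:R <= 1 :> R.
  by have := @count_k x r 0%N P r0 uP hP; rewrite !expr0 mulr1.
apply: lerD => //.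
have -> : r * delta b m * mmax m = r * S by rewrite /S mulrA.
have D0 : 0 <= r * S by rewrite mulr_ge0.
have hc : forall k, (0 < k)%N -> (c k)%:R * k%:R ^+ k <= (r * S) ^+ k.
  by move=> k _; exact: (@count_k x r k P r0 uP hP).
have [A1 A2] := @arith R (r * S) c K D0 hc.
have -> : (\sum_(i < K) c (bump 0 i))%N = (\sum_(k < K) c k.+1)%N by [].
case: (leP 1 (r * S)) => D1.
  apply: le_trans (A1 D1) _.
  by rewrite -powR_mulrn // ler_powR.
by rewrite A2 // powR_ge0.
Qed.

Lemma dist_le x y s : is_path b x s -> last x s = y -> dist b x y <= plength b x s.
Proof.
move=> ps ls; apply: ge_inf; last by exists s.
by exists 0 => _ [q _ <-]; exact: plength_ge0.
Qed.

Lemma dist_ge x y c : (exists s, is_path b x s /\ last x s = y) ->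
  (forall s, is_path b x s -> last x s = y -> c <= plength b x s) -> c <= dist b x y.
Proof.
move=> [s hs] h; apply: lb_le_inf; first by exists (plength b x s); exists s.
by move=> _ [q [pq lq] <-]; exact: h.
Qed.

Lemma dist_xx x : dist b x x = 0.
Proof.
apply/le_anti/andP; split; first exact: (@dist_le x x [::]).
by apply: dist_ge; [exists [::] | move=> q _ _; exact: plength_ge0].
Qed.

Lemma dist_ge0 x y : (exists s, is_path b x s /\ last x s = y) -> 0 <= dist b x y.
Proof. by move=> h; apply: dist_ge => // q _ _; exact: plength_ge0. Qed.

Hypothesis hcon : connected_graph b.

Lemma geodesic x y : exists s, is_path b x s /\ last x s = y /\ plength b x s = dist b x y.
Proof.
have [p0 [pp0 lp0]] := hcon x y.
set L0 := plength b x p0.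
have L00 : 0 <= L0 by exact: plength_ge0.
set B := powR (L0 * delta b m * mmax m) (L0 * bmax b) + 1.
have B0 : 0 <= B by rewrite addr_ge0 ?powR_ge0.
pose A := fun p => is_path b x p /\ last x p = y /\ plength b x p <= L0.
have [Q [uQ hQ]] : exists Q, uniq Q /\ forall q, q \in Q <-> A q.
  apply: (@bounded_finite _ A (Num.Def.archi_bound B)) => q uq hq.
  have := @path_count x L0 q L00 uq (fun p hp => match hq p hp with conj a (conj _ c) => conj a c end).
  move=> h; have := le_lt_trans h (archi_boundP B0); rewrite ltr_nat; exact: ltnW.
have p0Q : p0 \in Q by apply/hQ; split => //; split.
have [q qQ hq] := @seq_argmin R _ (fun p => plength b x p) Q p0 p0Q.
have [pq [lq _]] := (proj1 (hQ q)) qQ.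
exists q; split => //; split => //.
apply/le_anti/andP; split; last exact: dist_le.
apply: dist_ge; first by exists p0.
move=> s ps ls; case: (leP (plength b x s) L0) => h.
  by apply: hq; apply/hQ; split => //; split.
have := hq p0 p0Q; rewrite /= => h2; apply: le_trans h2 _; exact: ltW.
Qed.

Lemma sep (x0 : X) : exists e, 0 < e /\ forall x y, x <> y -> e <= dist b x y.
Proof.
have [_ [hb [b0 _]]] := bmax_fin x0.
have B0 : 0 < bmax b + 1 by rewrite ltr_wpDl.
exists (bmax b + 1)^-1; split; first by rewrite invr_gt0.
move=> x y nxy; apply: dist_ge; first exact: hcon.
move=> s ps ls.
have hb' : forall u v, b u v <= bmax b + 1 by move=> u v; rewrite ler_wpDr.
have := @size_bound _ _ _ B0 hb' ps.
case: s ps ls => [|z s] ps ls; first by rewrite /= in ls.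
move=> h; apply: le_trans h; rewrite ler_peMr ?invr_ge0 ?(ltW B0) //.
by rewrite /= ler1n.
Qed.

Lemma ball_count x r Y : 0 <= r -> uniq Y -> (forall y, y \in Y -> cball b x r y) ->
  (size Y)%:R <= powR (r * delta b m * mmax m) (r * bmax b) + 1.
Proof.
move=> r0 uY hY.
have [g hg] : exists g : X -> seq X, forall y,
    is_path b x (g y) /\ last x (g y) = y /\ plength b x (g y) = dist b x y.
  by exists (fun y => projT1 (cid (geodesic x y))) => y; exact: (projT2 (cid (geodesic x y))).
rewrite -(size_map g); apply: (@path_count x r) => //.
  rewrite map_inj_in_uniq // => y1 y2 _ _ e.
  have [_ [l1 _]] := hg y1; have [_ [l2 _]] := hg y2.
  by rewrite -l1 e l2.
move=> p /mapP [y yY ->]; have [pp [_ pl]] := hg y; split => //.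
by rewrite pl; exact: hY.
Qed.

Lemma ball_enum x r : 0 <= r -> exists s : seq X, uniq s /\ (forall y, y \in s <-> cball b x r y) /\
        (size s)%:R <= powR (r * delta b m * mmax m) (r * bmax b) + 1.
Proof.
move=> r0.
set B := powR (r * delta b m * mmax m) (r * bmax b) + 1.
have B0 : 0 <= B by rewrite addr_ge0 ?powR_ge0.
have [s [us hs]] : exists s, uniq s /\ forall y, y \in s <-> cball b x r y.
  apply: (@bounded_finite _ _ (Num.Def.archi_bound B)) => Y uY hY.
  have h := @ball_count x r Y r0 uY hY.
  have := le_lt_trans h (archi_boundP B0); rewrite ltr_nat; exact: ltnW.
exists s; split => //; split => //.
exact: (@ball_count x r s r0 us (fun y hy => proj1 (hs y) hy)).
Qed.

Lemma main_ne (x0 : X) :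
  ((bmax_e b < +oo)%E /\ bmax b <= delta b m * mmax m) /\
  ((forall (x0 : X) (s : seq X), is_path b x0 s ->
       (bmax b)^-1 * (size s)%:R <= plength b x0 s) /\
   (forall x y : X, x <> y -> 1 / bmax b <= dist b x y)) /\
  (d_locally_compact b /\ d_complete b) /\
  ((forall (r : R) (x : X), 0 <= r ->
      exists s : seq X, uniq s /\ (forall y, y \in s <-> cball b x r y) /\
        (size s)%:R <= powR (r * delta b m * mmax m) (r * bmax b) + 1) /\
   (forall r : R, 0 <= r -> exists M : R,
      forall x : X, (\esum_(y in cball b x r) (m y)%:E <= M%:E)%E)) /\
  (forall x y : X, exists s : seq X,
      is_path b x s /\ last x s = y /\ plength b x s = dist b x y).
Proof.
have [be [hb [b0 bS]]] := bmax_fin x0.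
have mm0 : 0 <= mmax m by apply: le_trans (ltW (m_gt0 x0)) (m_le_mmax x0).
split; first by split => //; rewrite be ltry.
split.
  split.
    move=> x s ps; have [bp|bz] := ltrP 0 (bmax b).
      exact: size_bound.
    have -> : bmax b = 0 by apply/le_anti/andP.
    by rewrite invr0 mul0r plength_ge0.
  move=> x y nxy; apply: dist_ge; first exact: hcon.
  move=> s ps ls.
  case: s ps ls => [|z s] ps ls; first by rewrite /= in ls.
  have [bp|bz] := ltrP 0 (bmax b).
    apply: le_trans (@size_bound _ _ _ bp hb ps); rewrite div1r ler_peMr ?invr_ge0 ?(ltW bp) //.
    by rewrite /= ler1n.
  have -> : bmax b = 0 by apply/le_anti/andP.
  by rewrite invr0 mulr0 plength_ge0.
have [e [e0 he]] := sep x0.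
split.
  split.
    move=> x; exists [set x]; split.
      exists e => // y /= hy.
      case: (pselect (y = x)) => // nyx.
      have := he x y (fun h => nyx (esym h)).
      by rewrite leNgt hy.
    move=> I U hU hK.
    have [i _ Ui] := hK x erefl.
    by exists [:: i] => z /= ->; exists i => //=; left.
  move=> u hu.
  have [N hN] := hu e e0.
  exists (u N) => eps eps0; exists N => n hn.
  case: (pselect (u n = u N)) => [->|nuN]; first by rewrite dist_xx.
  have := he _ _ nuN; have := hN n N hn (leqnn N).
  by move=> h1 h2; have := lt_le_trans h1 h2; rewrite ltxx.
split; last exact: geodesic.
split; first by move=> r x r0; exact: (@ball_enum x r r0).
move=> r r0.
exists ((powR (r * delta b m * mmax m) (r * bmax b) + 1) * mmax m) => x.
have [s [us [hs hsz]]] := @ball_enum x r r0.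
have -> : cball b x r = [set` s].
  by apply/seteqP; split => y /= /hs.
rewrite esum_fset //; last by move=> y _; rewrite lee_fin ltW // m_gt0.
rewrite -fsbig_seq // sumEFin lee_fin.
apply: (@le_trans _ _ (\sum_(y <- s) mmax m)).
  by rewrite big_seq [X in _ <= X]big_seq; apply: ler_sum => y _; exact: m_le_mmax.
  by rewrite sum_const_seq ler_wpM2r.
exact: finite_seq.
Qed.

End Main.

Theorem proposition2p1 (R : realType) (X : countType) (b : X -> X -> R) (m : X -> R) :
  weighted_graph b m -> connected_graph b -> cond_B b m -> cond_M m ->
  (* b_max <= delta * m_max < oo *)
  ((bmax_e b < +oo)%E /\ bmax b <= delta b m * mmax m) /\
  (* (a) *)
  ((forall (x0 : X) (s : seq X), is_path b x0 s ->
       (bmax b)^-1 * (size s)%:R <= plength b x0 s) /\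
   (forall x y : X, x <> y -> 1 / bmax b <= dist b x y)) /\
  (* (b) *)
  (d_locally_compact b /\ d_complete b) /\
  (* (c) *)
  ((forall (r : R) (x : X), 0 <= r ->
      exists s : seq X, uniq s /\ (forall y, y \in s <-> cball b x r y) /\
        (size s)%:R <= powR (r * delta b m * mmax m) (r * bmax b) + 1) /\
   (forall r : R, 0 <= r -> exists M : R,
      forall x : X, (\esum_(y in cball b x r) (m y)%:E <= M%:E)%E)) /\
  (* (d) *)
  (forall x y : X, exists s : seq X,
      is_path b x s /\ last x s = y /\ plength b x s = dist b x y).
Proof.
move=> wg hcon cB cM.
case: (pselect (exists x : X, True)) => [[x0 _]|nX].
  exact: (@main_ne R X b m wg cB cM hcon x0).
have nx : forall x : X, False by move=> x; apply: nX; exists x.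
have e1 : (bmax_e b = -oo)%E.
  rewrite /bmax_e (_ : [set _ | _ in _] = set0) ?ereal_sup0 //.
  by apply/seteqP; split => // y [[u v] _ _]; case: (nx u).
have e2 : (delta_e b m = -oo)%E.
  rewrite /delta_e (_ : [set _ | _ in _] = set0) ?ereal_sup0 //.
  by apply/seteqP; split => // y [u _ _]; case: (nx u).
have e3 : (mmax_e m = -oo)%E.
  rewrite /mmax_e (_ : [set _ | _ in _] = set0) ?ereal_sup0 //.
  by apply/seteqP; split => // y [u _ _]; case: (nx u).
split; first by split; rewrite ?e1 // /bmax /delta /mmax e1 e2 e3 /= mulr0.
split; first by split => [x|x]; case: (nx x).
split; first by split => [x|u _]; [case: (nx x) | case: (nx (u 0%N))].
split; last by move=> x; case: (nx x).
split; first by move=> r x; case: (nx x).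
by move=> r _; exists 0 => x; case: (nx x).
Qed.
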